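(* Let $\mathcal{X}$ be a Hilbert $C^*$-module over a $C^*$-algebra $\mathcal{A}$, let $T\in\mathcal{L}(\mathcal{X})$ be self-adjoint, and let $A,B\in\mathcal{Z}(\mathcal{A})$ be such that the operator $C_{A,B}(T)=(T-R_A)^*(R_B-T)$ is accretive. Then \[ \langle T^2h,h\rangle-\langle Th,h\rangle^2\leq \tfrac14|B-A|^2-\langle {\rm Re}\,C_{A,B}(T)h,h\rangle\leq \tfrac14|B-A|^2 \] for every lifted projection $h\in\mathcal{X}$.
   Context: The $\mathcal{A}$-valued inner product $\langle\cdot,\cdot\rangle$ is $\mathcal{A}$-linear in the second variable ($\langle x,ya\rangle=\langle x,y\rangle a$). $\mathcal{L}(\mathcal{X})$ is the $C^*$-algebra of adjointable maps on $\mathcal{X}$. $\mathcal{Z}(\mathcal{A})$ is the center of $\mathcal{A}$; for $A\in\mathcal{Z}(\mathcal{A})$, $R_A\in\mathcal{L}(\mathcal{X})$ is defined by $R_Ax=xA$. For $a\in\mathcal{A}$, $|a|^2=a^*a$. An operator $S$ is accretive if ${\rm Re}\,S=(S+S^* )/2\geq 0$. An element $h\in\mathcal{X}$ is a lifted projection if $\langle h,h\rangle^{1/2}$ is a (nonzero) projection in $\mathcal{A}$. *)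

(* Defs.v *)
From HB Require Import structures.
From mathcomp Require Import all_boot all_order all_algebra.
From mathcomp Require Import complex reals.
From Stdlib Require Import ClassicalEpsilon.
Set Implicit Arguments. Unset Strict Implicit. Unset Printing Implicit Defensive.
Import Order.TTheory GRing.Theory Num.Theory.
Local Open Scope ring_scope.

Record cstar_alg (R : realType) (A : lmodType R[i]) := CStarAlg {
  cmul : A -> A -> A;
  cstar : A -> A;
  cnorm : A -> R;
  cmulA : forall a b c, cmul a (cmul b c) = cmul (cmul a b) c;
  cmulDl : forall a b c, cmul (a + b) c = cmul a c + cmul b c;
  cmulDr : forall a b c, cmul a (b + c) = cmul a b + cmul a c;
  cmulZl : forall (l : R[i]) a b, cmul (l *: a) b = l *: cmul a b;
  cmulZr : forall (l : R[i]) a b, cmul a (l *: b) = l *: cmul a b;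
  cstarD : forall a b, cstar (a + b) = cstar a + cstar b;
  cstarZ : forall (l : R[i]) a, cstar (l *: a) = conjc l *: cstar a;
  cstarK : forall a, cstar (cstar a) = a;
  cstarM : forall a b, cstar (cmul a b) = cmul (cstar b) (cstar a);
  cnorm_eq0 : forall a, cnorm a = 0 -> a = 0;
  cnormD : forall a b, cnorm (a + b) <= cnorm a + cnorm b;
  cnormZ : forall (l : R[i]) a, cnorm (l *: a) = ComplexField.Normc.normc l * cnorm a;
  cnormM : forall a b, cnorm (cmul a b) <= cnorm a * cnorm b;
  cnorm_cstar : forall a, cnorm (cmul (cstar a) a) = cnorm a ^+ 2;
  ccomplete : forall u : nat -> A,
    (forall e : R, 0 < e -> exists N, forall n m, (N <= n)%N -> (N <= m)%N ->
        cnorm (u n - u m) < e) ->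
    exists l, forall e : R, 0 < e -> exists N, forall n, (N <= n)%N ->
        cnorm (u n - l) < e
}.


(* positive elements: a = b^* b  (the standard characterization of A_+) *)
Definition cpos (R : realType) (A : lmodType R[i]) (cA : cstar_alg A) (a : A) :=
  exists b, a = cmul cA (cstar cA b) b.

Definition cle (R : realType) (A : lmodType R[i]) (cA : cstar_alg A) (a b : A) :=
  cpos cA (b - a).

Definition csq_abs (R : realType) (A : lmodType R[i]) (cA : cstar_alg A) (a : A) :=
  cmul cA (cstar cA a) a.

Definition central (R : realType) (A : lmodType R[i]) (cA : cstar_alg A) (a : A) :=
  forall b, cmul cA a b = cmul cA b a.

Definition cprojection (R : realType) (A : lmodType R[i]) (cA : cstar_alg A) (p : A) :=
  cmul cA p p = p /\ cstar cA p = p.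

Definition is_csqrt (R : realType) (A : lmodType R[i]) (cA : cstar_alg A) (q a : A) :=
  cpos cA q /\ cmul cA q q = a.

Record hmodule (R : realType) (A : lmodType R[i]) (cA : cstar_alg A)
    (X : lmodType R[i]) := HModule {
  ract : X -> A -> X;
  ip : X -> X -> A;
  ractDl : forall x y a, ract (x + y) a = ract x a + ract y a;
  ractDr : forall x a b, ract x (a + b) = ract x a + ract x b;
  ractM : forall x a b, ract (ract x a) b = ract x (cmul cA a b);
  ractZl : forall (l : R[i]) x a, ract (l *: x) a = l *: ract x a;
  ractZr : forall (l : R[i]) x a, ract x (l *: a) = l *: ract x a;
  ipD : forall x y z, ip x (y + z) = ip x y + ip x z;
  ipZ : forall (l : R[i]) x y, ip x (l *: y) = l *: ip x y;
  ipM : forall x y a, ip x (ract y a) = cmul cA (ip x y) a;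
  ip_sym : forall x y, ip y x = cstar cA (ip x y);
  ip_pos : forall x, cpos cA (ip x x);
  ip_eq0 : forall x, ip x x = 0 -> x = 0;
  hcomplete : forall u : nat -> X,
    (forall e : R, 0 < e -> exists N, forall n m, (N <= n)%N -> (N <= m)%N ->
        Num.sqrt (cnorm cA (ip (u n - u m) (u n - u m))) < e) ->
    exists l, forall e : R, 0 < e -> exists N, forall n, (N <= n)%N ->
        Num.sqrt (cnorm cA (ip (u n - l) (u n - l))) < e
}.


Definition is_adjoint (R : realType) (A : lmodType R[i]) (cA : cstar_alg A)
    (X : lmodType R[i]) (M : hmodule cA X) (S S' : X -> X) :=
  forall x y, ip M (S x) y = ip M x (S' y).

Definition adjointable (R : realType) (A : lmodType R[i]) (cA : cstar_alg A)
    (X : lmodType R[i]) (M : hmodule cA X) (S : X -> X) :=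
  exists S', is_adjoint M S S'.

(* the adjoint S^* (unique by definiteness of the inner product) *)
Definition adj (R : realType) (A : lmodType R[i]) (cA : cstar_alg A)
    (X : lmodType R[i]) (M : hmodule cA X) (S : X -> X) : X -> X :=
  epsilon (inhabits (fun x : X => x)) (fun S' => is_adjoint M S S').

Definition Rop (R : realType) (A : lmodType R[i]) (cA : cstar_alg A)
    (X : lmodType R[i]) (M : hmodule cA X) (a : A) : X -> X :=
  fun x => ract M x a.

Definition op_pos (R : realType) (A : lmodType R[i]) (cA : cstar_alg A)
    (X : lmodType R[i]) (M : hmodule cA X) (S : X -> X) :=
  exists Q, adjointable M Q /\ forall x, S x = adj M Q (Q x).

Definition ReOp (R : realType) (A : lmodType R[i]) (cA : cstar_alg A)
    (X : lmodType R[i]) (M : hmodule cA X) (S : X -> X) : X -> X :=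
  fun x => (2%:R : R[i])^-1 *: (S x + adj M S x).

Definition accretive (R : realType) (A : lmodType R[i]) (cA : cstar_alg A)
    (X : lmodType R[i]) (M : hmodule cA X) (S : X -> X) :=
  op_pos M (ReOp M S).

Definition CAB (R : realType) (A : lmodType R[i]) (cA : cstar_alg A)
    (X : lmodType R[i]) (M : hmodule cA X) (T : X -> X) (a b : A) : X -> X :=
  fun x => adj M (fun y => T y - Rop M a y) (Rop M b x - T x).

Definition lifted_projection (R : realType) (A : lmodType R[i]) (cA : cstar_alg A)
    (X : lmodType R[i]) (M : hmodule cA X) (h : X) :=
  exists p, is_csqrt cA p (ip M h h) /\ cprojection cA p /\ p != 0.

(* Main.v *)
Require Import Defs.
From HB Require Import structures.
From mathcomp Require Import all_boot all_order all_algebra.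
From mathcomp Require Import complex reals.
From Stdlib Require Import ClassicalEpsilon.
Import Order.TTheory GRing.Theory Num.Theory.
Local Open Scope ring_scope.
Set Implicit Arguments. Unset Strict Implicit.

Section Alg.
Variables (R : realType) (A : lmodType R[i]) (cA : cstar_alg A).
Local Notation "x ** y" := (cmul cA x y) (at level 40, left associativity).
Local Notation st := (cstar cA).

Lemma cmul0l b : 0 ** b = 0.
Proof. by apply: (@addrI _ (0 ** b)); rewrite -cmulDl !addr0. Qed.
Lemma cmul0r b : b ** 0 = 0.
Proof. by apply: (@addrI _ (b ** 0)); rewrite -cmulDr !addr0. Qed.
Lemma cmulNl a b : (- a) ** b = - (a ** b).
Proof. by apply/eqP; rewrite -addr_eq0 -cmulDl addNr cmul0l. Qed.
Lemma cmulNr a b : a ** (- b) = - (a ** b).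
Proof. by apply/eqP; rewrite -addr_eq0 -cmulDr addNr cmul0r. Qed.
Lemma cmulBl a b c : (a - b) ** c = a ** c - b ** c.
Proof. by rewrite cmulDl cmulNl. Qed.
Lemma cmulBr a b c : c ** (a - b) = c ** a - c ** b.
Proof. by rewrite cmulDr cmulNr. Qed.
Lemma cstar0 : st 0 = 0 :> A.
Proof. by apply: (@addrI _ (st 0)); rewrite -cstarD !addr0. Qed.
Lemma cstarN a : st (- a) = - st a.
Proof. by apply/eqP; rewrite -addr_eq0 -cstarD addNr cstar0. Qed.
Lemma cstarB a b : st (a - b) = st a - st b.
Proof. by rewrite cstarD cstarN. Qed.

Lemma central_star a : central cA a -> central cA (st a).
Proof.
move=> ca x; by rewrite -[x](cstarK cA) -cstarM -ca cstarM !cstarK.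
Qed.
Lemma centralD a b : central cA a -> central cA b -> central cA (a + b).
Proof. by move=> ca cb x; rewrite cmulDl cmulDr ca cb. Qed.
Lemma centralB a b : central cA a -> central cA b -> central cA (a - b).
Proof. by move=> ca cb x; rewrite cmulBl cmulBr ca cb. Qed.
Lemma centralZ l a : central cA a -> central cA (l *: a).
Proof. by move=> ca x; rewrite cmulZl cmulZr ca. Qed.
End Alg.

Section Key.
Variables (R : realType) (A : lmodType R[i]) (cA : cstar_alg A).
Local Notation "x ** y" := (cmul cA x y) (at level 40, left associativity).
Local Notation st := (cstar cA).

Lemma key (t p m e s : A) : central cA m -> central cA e -> st t = t -> st p = p ->
  p ** p = p -> t ** p = t -> p ** t = t ->
  (st e ** e - (st e ** (p ** e) - (s - t ** m - st m ** t + st m ** (p ** m)))) - (s - t ** t)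
  = st ((t - p ** m) + (e - e ** p)) ** ((t - p ** m) + (e - e ** p)).
Proof.
move=> cm ce ht hp hpp htp hpt.
have cm' := central_star cm; have ce' := central_star ce.
rewrite cstarD !cstarB !cstarM ht hp -(ce' p).
rewrite !(cmulDl, cmulBl, cmulDr, cmulBr, cmulNl, cmulNr) ?opprK.
have e1 : t ** (p ** m) = t ** m by rewrite cmulA htp.
have e3 : t ** (e ** p) = e ** t by rewrite (ce p) cmulA htp (ce t).
have e4 : (st m ** p) ** t = st m ** t by rewrite -cmulA hpt.
have e5 : (st m ** p) ** (p ** m) = st m ** (p ** m) by rewrite -cmulA (cmulA _ p p) hpp.
have e6 : (st m ** p) ** e = st m ** (p ** e) by rewrite -cmulA.
have e7 : (st m ** p) ** (e ** p) = st m ** (p ** e) by rewrite (ce p) -cmulA (cmulA _ p p) hpp.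
have e8 : st e ** (e ** p) = st e ** (p ** e) by rewrite (ce p).
have e9 : (st e ** p) ** t = st e ** t by rewrite -cmulA hpt.
have e10 : (st e ** p) ** (p ** m) = st e ** (p ** m) by rewrite -cmulA (cmulA _ p p) hpp.
have e11 : (st e ** p) ** e = st e ** (p ** e) by rewrite -cmulA.
have e12 : (st e ** p) ** (e ** p) = st e ** (p ** e) by rewrite (ce p) -cmulA (cmulA _ p p) hpp.

rewrite e1 e3 e4 e5 e6 e7 e8 e9 e10 e11 e12 -(ce t).
move: (t ** t) (t ** m) (e ** t) (st m ** t) (st m ** (p ** m)) (st m ** (p ** e)) (st e ** t) (st e ** (p ** m)) (st e ** e) (st e ** (p ** e)) s.
move=> x1 x2 x3 x4 x5 x6 x7 x8 x9 x10 x11.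

rewrite !opprD !opprK !addrA.
rewrite [LHS](@GRing.add A).[ACl ((3*7)*8*4*5*6*1*2)] [RHS](@GRing.add A).[ACl ((3*4)*(7*8)*(9*13)*(10*14)*(15*16)*1*2*5*6*11*12)].
by rewrite !subrr !addNr !add0r.
Qed.
End Key.

Section Mod.
Variables (R : realType) (A : lmodType R[i]) (cA : cstar_alg A).
Variables (X : lmodType R[i]) (M : hmodule cA X).
Local Notation "x ** y" := (cmul cA x y) (at level 40, left associativity).
Local Notation st := (cstar cA).
Local Notation ip := (ip M).
Local Notation ract := (ract M).

Lemma ip0r x : ip x 0 = 0.
Proof. by apply: (@addrI _ (ip x 0)); rewrite -ipD !addr0. Qed.
Lemma ipNr x y : ip x (- y) = - ip x y.
Proof. by apply/eqP; rewrite -addr_eq0 -ipD addNr ip0r. Qed.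
Lemma ipBr x y z : ip x (y - z) = ip x y - ip x z.
Proof. by rewrite ipD ipNr. Qed.
Lemma ipDl x y z : ip (x + y) z = ip x z + ip y z.
Proof. by rewrite ip_sym ipD cstarD -!ip_sym. Qed.
Lemma ipNl x y : ip (- x) y = - ip x y.
Proof. by rewrite ip_sym ipNr cstarN -ip_sym. Qed.
Lemma ipBl x y z : ip (x - y) z = ip x z - ip y z.
Proof. by rewrite ipDl ipNl. Qed.
Lemma ipRl x a y : ip (ract x a) y = st a ** ip x y.
Proof. by rewrite ip_sym ipM cstarM -ip_sym. Qed.
Lemma ipZl l x y : ip (l *: x) y = conjc l *: ip x y.
Proof. by rewrite ip_sym ipZ cstarZ -ip_sym. Qed.
Lemma ract0r x : ract x 0 = 0.
Proof. by apply: (@addrI _ (ract x 0)); rewrite -ractDr !addr0. Qed.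
Lemma ractNr x a : ract x (- a) = - ract x a.
Proof. by apply/eqP; rewrite -addr_eq0 -ractDr addNr ract0r. Qed.
Lemma ractBr x a b : ract x (a - b) = ract x a - ract x b.
Proof. by rewrite ractDr ractNr. Qed.

Lemma adjP S : adjointable M S -> is_adjoint M S (adj M S).
Proof. by move=> hS; rewrite /adj; apply: epsilon_spec. Qed.
Lemma adj_sym S S' : is_adjoint M S S' -> forall x y, ip (S' x) y = ip x (S y).
Proof. by move=> hS x y; rewrite ip_sym -hS -ip_sym. Qed.

Lemma parallel w v : ip (v - w) (w + v) + ip (w + v) (v - w) = (ip v v - ip w w) *+ 2.
Proof.
rewrite !(ipBl, ipDl, ipBr, ipD) mulr2n !opprD ?opprK !addrA.
rewrite [LHS](@GRing.add A).[ACl ((1*8)*(4*5)*2*3*6*7)].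
by rewrite subrr addNr !add0r.
Qed.
End Mod.

Unset Implicit Arguments.

Theorem proposition4p5 (R : realType) (A : lmodType R[i]) (cA : cstar_alg A)
    (X : lmodType R[i]) (M : hmodule cA X) (T : X -> X) (a b : A) :
  adjointable M T -> adj M T = T ->
  central cA a -> central cA b ->
  accretive M (CAB M T a b) ->
  forall h : X, lifted_projection M h ->
    cle cA (ip M (T (T h)) h - cmul cA (ip M (T h) h) (ip M (T h) h))
           ((4%:R : R[i])^-1 *: csq_abs cA (b - a)
              - ip M (ReOp M (CAB M T a b) h) h)
    /\
    cle cA ((4%:R : R[i])^-1 *: csq_abs cA (b - a)
              - ip M (ReOp M (CAB M T a b) h) h)
           ((4%:R : R[i])^-1 *: csq_abs cA (b - a)).
Proof.
move=> Tadj Tsa ca cb acc h [p [[_ pph] [[pp ps] _]]].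
split; last first.
  rewrite /cle opprB addrC subrK.
  case: acc => Q [QA hQ].
  rewrite hQ (adj_sym (adjP QA)).
  exact: ip_pos.
have TA : is_adjoint M T T by rewrite -{2}Tsa; apply: adjP.
have hh : ip M h h = p by rewrite -pph pp.
have hp : ract M h p = h.
  apply/eqP; rewrite -subr_eq0; apply/eqP; apply: (@ip_eq0 _ _ _ _ M).
  by rewrite ipBl !ipBr !ipRl !ipM hh ps !pp !subrr.
set t := ip M (T h) h.
have ht1 : ip M h (T h) = t by rewrite /t TA.
have hts : cstar cA t = t by rewrite /t -ip_sym.
have htp : cmul cA t p = t by rewrite -ipM hp.
have hpt : cmul cA p t = t by rewrite -{1}ps -{1}hts -cstarM htp hts.
have hs : ip M (T (T h)) h = ip M (T h) (T h) by rewrite TA.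

have ca' := central_star ca; have cb' := central_star cb.
set S := fun y => T y - Rop M a y.
have SA : is_adjoint M S (fun y => T y - Rop M (cstar cA a) y).
  by move=> x y; rewrite /S /Rop ipBl ipBr ipRl ipM TA ca'.
have SA' : is_adjoint M S (adj M S) by apply: adjP; eexists; exact: SA.
have CA : is_adjoint M (CAB M T a b) (fun y => Rop M (cstar cA b) (S y) - T (S y)).
  move=> x y; rewrite /CAB -/S (adj_sym SA'); move: (S y) => z.
  by rewrite /Rop ipBl ipBr ipRl ipM TA cb'.
have CA' : is_adjoint M (CAB M T a b) (adj M (CAB M T a b)).
  by apply: adjP; eexists; exact: CA.
set m := (2%:R : R[i])^-1 *: (a + b).
set e := (2%:R : R[i])^-1 *: (b - a).
have cm : central cA m := centralZ _ (centralD ca cb).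
have ce : central cA e := centralZ _ (centralB cb ca).
have h2 : (2%:R : R[i])^-1 * 2%:R = 1 by rewrite mulVf // pnatr_eq0.
have h2' : (2%:R : R[i])^-1 *+ 2 = 1 by rewrite -(mulr_natr ((2%:R : R[i])^-1)) mulVf // pnatr_eq0.
have hc2 : conjc ((2%:R : R[i])^-1) = 2%:R^-1.
  by rewrite rmorphV ?rmorph_nat // unitfE pnatr_eq0.
have ha : a = m - e.
  by rewrite /m /e -scalerBr opprB addrACA subrr addr0 -mulr2n -scalerMnr scalerMnl h2' scale1r.
have hb : b = m + e.
  by rewrite /m /e -scalerDr [a + b]addrC addrACA subrr addr0 -mulr2n -scalerMnr scalerMnl h2' scale1r.
set w := T h - ract M h m.
have hRe : ip M (ReOp M (CAB M T a b) h) h = ip M (ract M h e) (ract M h e) - ip M w w.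
  rewrite /ReOp ipZl ipDl hc2 (adj_sym CA') /CAB -/S (adj_sym SA') -SA' /S /Rop.
  rewrite {1 2}hb {1 2}ha ractDr ractBr.
  have e1 : ract M h m + ract M h e - T h = ract M h e - w.
    by rewrite /w opprB addrA (addrC (ract M h e)).
  have e2 : T h - (ract M h m - ract M h e) = w + ract M h e.
    by rewrite /w opprB addrA addrAC.
  by rewrite e1 e2 parallel -scalerMnr scalerMnl h2' scale1r.
have hE : ip M (ract M h e) (ract M h e) = cmul cA (cstar cA e) (cmul cA p e).
  by rewrite ipRl ipM hh.
have hW : ip M w w = ip M (T h) (T h) - cmul cA t m - cmul cA (cstar cA m) t
    + cmul cA (cstar cA m) (cmul cA p m).
  by rewrite /w ipBl !ipBr !ipRl !ipM ht1 hh opprB addrA addrAC.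
have h4 : (4%:R : R[i])^-1 *: csq_abs cA (b - a) = cmul cA (cstar cA e) e.
  by rewrite /e /csq_abs cstarZ cmulZl cmulZr scalerA hc2 -invfM -natrM.
rewrite /cle hs hRe hE hW h4.
exists ((t - cmul cA p m) + (e - cmul cA e p)).
by apply: key.
Qed.
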